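(* Let $r\ge2$ be an integer, let $f\in C_p(\mathbb{R})$, let $n\in\mathbb{N}_0$, $k\in\{0,1,\dots,r^n-1\}$, $y\in(0,1)$ and $t\in(0,\infty)$. Then $$q_f\Big(t,x;\tfrac{k+y}{r^n}\Big)\ge \min\Big\{q_f\Big(t,x;\tfrac{k}{r^n}\Big),\,q_f\Big(t,x;\tfrac{k+1}{r^n}\Big)\Big\}\quad\text{for all }x\in\mathbb{R}$$ holds if and only if $\Delta_{n,k}(y;f)\le -\frac1t$.
   Context: $C_p(\mathbb{R})$ denotes the set of all continuous functions $f:\mathbb{R}\to\mathbb{R}$ periodic with period $1$ with $f(0)=0$; $\mathbb{N}_0=\mathbb{N}\cup\{0\}$. For $f\in C_p(\mathbb{R})$, $q_f(t,x;z)=f(z)+\frac{1}{2t}(x-z)^2$ for $(t,x,z)\in(0,\infty)\times\mathbb{R}\times\mathbb{R}$. For $(n,k,y)\in\mathbb{N}_0\times\mathbb{Z}\times(0,1)$, $\delta^+_{n,k}(y;f)=\dfrac{f(\frac{k+1}{r^n})-f(\frac{k+y}{r^n})}{\frac{1-y}{r^n}}$, $\delta^-_{n,k}(y;f)=\dfrac{f(\frac{k+y}{r^n})-f(\frac{k}{r^n})}{\frac{y}{r^n}}$, and $\Delta_{n,k}(y;f)=2r^n\big(\delta^+_{n,k}(y;f)-\delta^-_{n,k}(y;f)\big)$. *)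

(* Defs.v *)
From Stdlib Require Import Reals Lra ZArith.
Open Scope R_scope.

Definition Cp (f : R -> R) : Prop :=
  continuity f /\ (forall x, f (x + 1) = f x) /\ f 0 = 0.

Definition q (f : R -> R) (t x z : R) : R := f z + (x - z) ^ 2 / (2 * t).

Definition pt (r : nat) (n : nat) (k : Z) (y : R) : R := (IZR k + y) / (INR r ^ n).

Definition delta_plus (r n : nat) (k : Z) (y : R) (f : R -> R) : R :=
  (f (pt r n k 1) - f (pt r n k y)) / ((1 - y) / (INR r ^ n)).

Definition delta_minus (r n : nat) (k : Z) (y : R) (f : R -> R) : R :=
  (f (pt r n k y) - f (pt r n k 0)) / (y / (INR r ^ n)).

Definition Delta_nk (r n : nat) (k : Z) (y : R) (f : R -> R) : R :=
  2 * INR r ^ n * (delta_plus r n k y f - delta_minus r n k y f).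

(* Main.v *)
Require Import Defs.
From Stdlib Require Import Reals ZArith Lra Psatz.
Open Scope R_scope.

Lemma key (a H y t fa fb fc dp dm : R) :
  0 < H -> 0 < y < 1 -> 0 < t ->
  dp * ((1 - y) / H) = fb - fc -> dm * (y / H) = fc - fa ->
  ((forall x : R,
      fc + (x - (a + y / H)) ^ 2 / (2 * t) >=
      Rmin (fa + (x - a) ^ 2 / (2 * t)) (fb + (x - (a + 1 / H)) ^ 2 / (2 * t)))
   <-> 2 * H * (dp - dm) <= - (1 / t)).
Proof.
  intros HH Hy Ht Ep Em.
  set (h := / H).
  assert (Hh : 0 < h) by (apply Rinv_0_lt_compat; lra).
  assert (HHh : H * h = 1) by (unfold h; field; lra).
  assert (Ep' : fb = fc + dp * (1 - y) * h).
  { replace (dp * (1 - y) * h) with (dp * ((1 - y) / H)) by (unfold h; field; lra). lra. }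
  assert (Em' : fc = fa + dm * y * h).
  { replace (dm * y * h) with (dm * (y / H)) by (unfold h; field; lra). lra. }
  set (X1 := a + y * h / 2 + t * dm).
  set (X2 := a + h / 2 + y * h / 2 + t * dp).
  assert (Da : forall x, fc + (x - (a + y / H)) ^ 2 / (2 * t) - (fa + (x - a) ^ 2 / (2 * t))
                 = (y * h / t) * (X1 - x)).
  { intro x. unfold X1. rewrite Em'. unfold h. field. lra. }
  assert (Db : forall x, fc + (x - (a + y / H)) ^ 2 / (2 * t) - (fb + (x - (a + 1 / H)) ^ 2 / (2 * t))
                 = ((1 - y) * h / t) * (x - X2)).
  { intro x. unfold X2. rewrite Ep'. unfold h. field. lra. }
  assert (Eq : 2 * H * (dp - dm) <= - (1 / t) <-> X2 <= X1).
  { unfold X1, X2. split; intro C.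
    - assert (C' : t * h * (2 * H * (dp - dm)) <= t * h * (- (1 / t))).
      { apply Rmult_le_compat_l; [nra | exact C]. }
      replace (t * h * (2 * H * (dp - dm))) with (2 * t * (dp - dm) * (H * h)) in C' by ring.
      rewrite HHh in C'.
      replace (t * h * - (1 / t)) with (- h) in C' by (field; lra). lra.
    - assert (C' : 2 * t * (dp - dm) <= - h) by lra.
      assert (C'' : H / t * (2 * t * (dp - dm)) <= H / t * (- h)).
      { apply Rmult_le_compat_l; [apply Rlt_le; apply Rdiv_lt_0_compat; lra | exact C']. }
      replace (H / t * (2 * t * (dp - dm))) with (2 * H * (dp - dm)) in C'' by (field; lra).
      replace (H / t * - h) with (- (1 / t) * (H * h)) in C'' by (field; lra).
      rewrite HHh in C''. lra. }
  rewrite Eq. split.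
  - intros Hall. destruct (Rle_or_lt X2 X1) as [L|L]; [exact L|].
    exfalso. set (x := (X1 + X2) / 2).
    specialize (Hall x). specialize (Da x). specialize (Db x).
    assert (P1 : (y * h / t) * (X1 - x) < 0).
    { assert (0 < y * h / t) by (apply Rdiv_lt_0_compat; nra).
      unfold x. nra. }
    assert (P2 : ((1 - y) * h / t) * (x - X2) < 0).
    { assert (0 < (1 - y) * h / t) by (apply Rdiv_lt_0_compat; nra).
      unfold x. nra. }
    pose proof (Rmin_l (fa + (x - a) ^ 2 / (2 * t)) (fb + (x - (a + 1 / H)) ^ 2 / (2 * t))).
    pose proof (Rmin_r (fa + (x - a) ^ 2 / (2 * t)) (fb + (x - (a + 1 / H)) ^ 2 / (2 * t))).
    unfold Rmin in Hall; destruct (Rle_dec _ _) in Hall; lra.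
  - intros L x. specialize (Da x). specialize (Db x).
    destruct (Rle_or_lt x X1) as [C|C].
    + assert (0 <= (y * h / t) * (X1 - x)).
      { apply Rmult_le_pos; [apply Rlt_le, Rdiv_lt_0_compat; nra | lra]. }
      pose proof (Rmin_l (fa + (x - a) ^ 2 / (2 * t)) (fb + (x - (a + 1 / H)) ^ 2 / (2 * t))).
      lra.
    + assert (0 <= ((1 - y) * h / t) * (x - X2)).
      { apply Rmult_le_pos; [apply Rlt_le, Rdiv_lt_0_compat; nra | lra]. }
      pose proof (Rmin_r (fa + (x - a) ^ 2 / (2 * t)) (fb + (x - (a + 1 / H)) ^ 2 / (2 * t))).
      lra.
Qed.

Theorem proposition2p2 (r : nat) (f : R -> R) (n : nat) (k : Z) (y t : R) :
  (2 <= r)%nat ->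
  Cp f ->
  (0 <= k <= Z.of_nat (Nat.pow r n) - 1)%Z ->
  0 < y < 1 ->
  0 < t ->
  ((forall x : R,
      q f t x (pt r n k y) >= Rmin (q f t x (pt r n k 0)) (q f t x (pt r n k 1)))
   <-> Delta_nk r n k y f <= - (1 / t)).
Proof.
  intros Hr _ _ Hy Ht.
  assert (HH : 0 < INR r ^ n).
  { apply pow_lt. apply lt_0_INR. lia. }
  set (H := INR r ^ n) in *.
  set (a := IZR k / H).
  assert (Ey : pt r n k y = a + y / H) by (unfold pt, a; fold H; field; lra).
  assert (E0 : pt r n k 0 = a) by (unfold pt, a; fold H; field; lra).
  assert (E1 : pt r n k 1 = a + 1 / H) by (unfold pt, a; fold H; field; lra).
  unfold q, Delta_nk. fold H. rewrite Ey, E0, E1.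
  apply (key a H y t (f a) (f (a + 1 / H)) (f (a + y / H))); auto.
  - unfold delta_plus. fold H. rewrite Ey, E1. field. split; lra.
  - unfold delta_minus. fold H. rewrite Ey, E0. field. split; lra.
Qed.
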